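(* Let $N\ge 2$, $a\in\mathbb{R}$, and let $P\in\mathbb{R}^{N\times N}$ be a symmetric, doubly stochastic matrix with nonnegative entries whose eigenvalues satisfy $-1<\lambda_N(P)\le\dots\le\lambda_2(P)<\lambda_1(P)=1$. Consider the state $x_{t+1}=ax_t+r_t$ and observations $y_{i,t}=x_t+w_{i,t}$, where the innovations $r_t$ and observation noises $w_{i,t}$ have zero mean, and for a signal weight $\alpha\in(0,1]$ the estimates $$\hat{x}_{i,t+1}=a\Big(\sum_{j=1}^N p_{ij}\hat{x}_{j,t}+\alpha(y_{i,t}-\hat{x}_{i,t})\Big),\qquad \tilde{x}_{i,t+1}=a\Big(\sum_{j=1}^N p_{ij}\tilde{x}_{j,t}+\alpha\Big(\sum_{j=1}^N p_{ij}y_{j,t}-\tilde{x}_{i,t}\Big)\Big).$$ Call the estimates asymptotically unbiased for $\alpha$ if, for every choice of initial estimates, $\mathbb{E}[\hat{x}_{i,t}-x_t]\to 0$ and $\mathbb{E}[\tilde{x}_{i,t}-x_t]\to0$ as $t\to\infty$ for all $i$ (equivalently, the spectral radius of $a(P-\alpha I_N)$ is less than $1$). Then there exists $\alpha\in(0,1]$ for which the estimates are asymptotically unbiased if and only if $$|a|<\frac{2}{1-\lambda_N(P)}.$$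
   Context: $a$ is the (known) rate of change of the state; $x_0$ is a random initial state with finite mean. *)

(* Defs.v *)
From HB Require Import structures.
From mathcomp Require Import all_boot all_order all_algebra.
From mathcomp Require Import all_classical all_reals all_analysis.
Set Implicit Arguments. Unset Strict Implicit. Unset Printing Implicit Defensive.
Import Order.TTheory GRing.Theory Num.Theory.
Local Open Scope classical_set_scope.
Local Open Scope ring_scope.

Definition sym_doubly_stochastic (R : realType) (N : nat) (P : 'M[R]_N) :=
  [/\ P^T = P,
      (forall i j, 0 <= P i j),
      (forall i, \sum_(j < N) P i j = 1) &
      (forall j, \sum_(i < N) P i j = 1)].

Fixpoint xhat (T : Type) (R : realType) (N : nat) (P : 'M[R]_N) (a alpha : R)
  (y : 'I_N -> nat -> T -> R) (xh0 : 'I_N -> R) (t : nat) : 'I_N -> T -> R :=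
  match t with
  | 0 => fun i _ => xh0 i
  | t'.+1 => fun i om =>
      a * (\sum_(j < N) P i j * xhat P a alpha y xh0 t' j om
           + alpha * (y i t' om - xhat P a alpha y xh0 t' i om))
  end.

Fixpoint xtil (T : Type) (R : realType) (N : nat) (P : 'M[R]_N) (a alpha : R)
  (y : 'I_N -> nat -> T -> R) (xt0 : 'I_N -> R) (t : nat) : 'I_N -> T -> R :=
  match t with
  | 0 => fun i _ => xt0 i
  | t'.+1 => fun i om =>
      a * (\sum_(j < N) P i j * xtil P a alpha y xt0 t' j om
           + alpha * (\sum_(j < N) P i j * y j t' om - xtil P a alpha y xt0 t' i om))
  end.

Definition asympt_unbiased d (T : measurableType d) (R : realType)
  (Pr : probability T R) (N : nat) (P : 'M[R]_N) (a alpha : R)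
  (x : nat -> T -> R) (y : 'I_N -> nat -> T -> R) : Prop :=
  forall (xh0 xt0 : 'I_N -> R) (i : 'I_N),
    ((fun t => ('E_Pr[(fun om => xhat P a alpha y xh0 t i om - x t om)%R])%E) @ \oo --> 0%E)
    /\ ((fun t => ('E_Pr[(fun om => xtil P a alpha y xt0 t i om - x t om)%R])%E) @ \oo --> 0%E).

(* Main.v *)
Require Import Defs.
From HB Require Import structures.
From mathcomp Require Import all_boot all_order all_algebra.
From mathcomp Require Import all_classical all_reals all_analysis.
Import Order.TTheory GRing.Theory Num.Theory.
Local Open Scope classical_set_scope.
Local Open Scope ring_scope.
From mathcomp Require Import ring lra zify.


Module Aux.
Import numFieldNormedType.Exports.
Lemma rec_cvg0 (R : realType) (u s : nat -> R) (mu : R) : `|mu| < 1 -> s @ \oo --> 0 ->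
  (forall t, u t.+1 = mu * u t + s t) -> u @ \oo --> 0.
Proof.
move=> mu1 s0 hu; apply/cvgrPdist_le => e e0.
set q := `|mu|.
have c0 : 0 < (1 - q) * e / 2 by rewrite divr_gt0 // mulr_gt0 // subr_gt0.
move/cvgrPdist_le: s0 => /(_ _ c0) [T _ HT].
have bnd : forall k, `|u (T + k)%N| <= q ^+ k * `|u T| + e / 2.
  elim=> [|k IH]; first by rewrite addn0 expr0 mul1r lerDl divr_ge0 // ltW.
  rewrite addnS hu.
  have hs : `|s (T + k)%N| <= (1 - q) * e / 2.
    by have := HT (T + k)%N (leq_addr _ _); rewrite sub0r normrN.
  apply: (le_trans (ler_normD _ _)); rewrite normrM -/q.
  have q0 : 0 <= q by rewrite normr_ge0.
  apply: (le_trans (lerD (ler_wpM2l q0 IH) hs)).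
  rewrite exprS -mulrA. 
  set z := q ^+ k * `|u T|.
  rewrite le_eqVlt; apply/orP; left; apply/eqP. rewrite -mulrA -/z. by field.
have e20 : 0 < e / 2 by rewrite divr_gt0.
have eps0 : 0 < e / 2 / (`|u T| + 1) by rewrite divr_gt0 // ltr_wpDl.
move/cvgrPdist_le: (cvg_expr mu1) => /(_ _ eps0) [K _ HK].
exists (T + K)%N => // t /= Ht.
have Tt : (T <= t)%N by apply: leq_trans Ht; exact: leq_addr.
have Kt : (K <= t - T)%N by rewrite leq_subRL.
have := bnd (t - T)%N; rewrite subnKC // => H1.
have := HK _ Kt; rewrite /= sub0r normrN normrX -/q => H2.
rewrite sub0r normrN; apply: (le_trans H1).
have uT0 : 0 <= `|u T| by [].
have : q ^+ (t - T) * `|u T| <= e / 2 / (`|u T| + 1) * `|u T| by apply: ler_wpM2r.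
have : e / 2 / (`|u T| + 1) * `|u T| <= e / 2.
  rewrite -mulrA ger_pMr // mulrC ler_pdivrMr ?ltr_wpDl //; lra.
lra.
Qed.


Lemma pow_cvg0 (R : realType) n (P : 'M[R]_n.+1) (a al : R) (s : seq R) :
  (forall l, l \in s -> `|a * (l - al)| < 1) ->
  forall v : 'rV_n.+1, v *m horner_mx P (\prod_(l <- s) ('X - l%:P)) = 0 ->
  forall i, (fun t => (v *m (a *: (P - al%:M)) ^+ t) 0 i) @ \oo --> 0.
Proof.
elim: s => [|l s IH] hs v hv i.
  move: hv; rewrite big_nil rmorph1 mulmx1 => hv; subst v.
  rewrite (_ : (fun t => _) = fun=> 0); first exact: cvg_cst.
  by apply/funext=> t; rewrite mul0mx mxE.
move: hv; rewrite big_cons rmorphM /= rmorphB /= horner_mx_X horner_mx_C mulmxA => hv.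
set w := v *m (P - l%:M) in hv.
have IHw := IH (fun l' hl' => hs l' (mem_behead (s := l :: s) hl')) w hv i.
set M := a *: (P - al%:M).
have vM : v *m M = (a * (l - al)) *: v + a *: w.
  rewrite /M /w -scalemxAr !mulmxBr !mul_mx_scalar.
  rewrite !scalerBr scalerA mulrBr scalerBl -!scalerA.
  by rewrite [RHS]addrC -addrA addKr.
have hu : forall t, (v *m M ^+ t.+1) 0 i = (a * (l - al)) * (v *m M ^+ t) 0 i + a * (w *m M ^+ t) 0 i.
  move=> t; rewrite exprS mulmxA vM mulmxDl -!scalemxAl {1}mxE; congr (_ + _); rewrite {1}mxE //.
apply: (@rec_cvg0 R (fun t => (v *m M ^+ t) 0 i) (fun t => a * (w *m M ^+ t) 0 i) _ (hs l (mem_head _ _)) _ hu).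
rewrite -(mulr0 a); apply: cvgM => //; exact: cvg_cst.
Qed.

Lemma cvgE0 (R : realType) (c : nat -> R) :
  ((fun t => (c t)%:E) @ \oo --> 0%E) <-> (c @ \oo --> 0).
Proof.
rewrite fine_cvgP; split; first by case.
move=> h; split => //; exact: nearW.
Qed.

Lemma not_cvg (R : realType) (mu z : R) : z != 0 -> 1 <= `|mu| ->
  ~ ((fun t => mu ^+ t * z) @ \oo --> 0).
Proof.
move=> z0 mu1 /cvgrPdist_le.
have e0 : 0 < `|z| / 2 by rewrite divr_gt0 // normr_gt0.
move=> /(_ _ e0) [K _ HK].
have := HK K (leqnn K); rewrite /= sub0r normrN normrM normrX.
have : 1 <= `|mu| ^+ K by rewrite exprn_ege1.
have : 0 < `|z| by rewrite normr_gt0.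
move=> zp h1 h2.
have : `|z| <= `|mu| ^+ K * `|z| by rewrite ler_peMl // ltW.
lra.
Qed.
End Aux.

Section IMs.
Local Set Implicit Arguments.
Context {R : realType} {d : measure_display} {T : measurableType d} {Pr : probability T R}.
Definition IM (f : T -> R) (m : R) := f \in Lfun Pr 1 /\ ('E_Pr[f] = m%:E)%E.
Lemma IM_add f g m n : IM f m -> IM g n -> IM (fun om => f om + g om) (m + n).
Proof. move=> [f1 fe] [g1 ge]; split.
  exact: (rpredD f1 g1).
by rewrite (expectationD f1 g1) fe ge. Qed.
Lemma IM_B f g m n : IM f m -> IM g n -> IM (fun om => f om - g om) (m - n).
Proof. move=> [f1 fe] [g1 ge]; split.
  exact: (rpredB f1 g1).
by rewrite (expectationB f1 g1) fe ge. Qed.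
Lemma IM_scale f m k : IM f m -> IM (fun om => k * f om) (k * m).
Proof. move=> [f1 fe]; split.
  by have := rpredZ k f1; apply; rewrite lexx.
rewrite EFinM -fe -expectationZl //. congr (expectation _ _); apply/funext=> x /=. by rewrite mulrC. Qed.
Lemma IM_cst c : IM (fun _ => c) c.
Proof. split; last exact: expectation_cst. exact: (Lfun_cst Pr c 1). Qed.
Lemma IM_sum (I : finType) (F : I -> T -> R) (m : I -> R) :
  (forall j, IM (F j) (m j)) -> IM (fun om => \sum_j F j om) (\sum_j m j).
Proof.
move=> H. rewrite /index_enum. elim: (Finite.enum I) => [|j s IH].
  by under eq_fun do rewrite big_nil; rewrite big_nil; exact: IM_cst.
under eq_fun do rewrite big_cons. rewrite big_cons. exact: IM_add.
Qed.
Lemma IM_ext f g m m' : (forall om, f om = g om) -> m = m' -> IM f m -> IM g m'.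
Proof. by move=> fg <-; rewrite (_ : g = f) //; apply/funext => om; rewrite fg. Qed.
End IMs.
Arguments IM {R d T} Pr f m.
Arguments IM_sum {R d T Pr I F m}.
Arguments IM_ext {R d T Pr f g m m'}.

Lemma mean_xhat (R : realType) (d : measure_display) (T : measurableType d)
  (Pr : probability T R) n (P : 'M[R]_n.+1) (a al m0 : R) (y : 'I_n.+1 -> nat -> T -> R)
  (xh0 : 'I_n.+1 -> R) :
  P^T = P -> (forall i, \sum_j P i j = 1) ->
  (forall i t, IM Pr (y i t) (a ^+ t * m0)) ->
  forall t i, IM Pr (xhat P a al y xh0 t i)
    (a ^+ t * m0 + ((\row_j (xh0 j - m0)) *m (a *: (P - al%:M)) ^+ t) 0 i).
Proof.
move=> Psym Prow HY t; elim: t => [|t IH] i.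
  apply: (IM_ext _ _ (IM_cst (xh0 i))) => //.
  by rewrite expr0 mulmx1 mxE mul1r addrC subrK.
have H := IM_scale a (IM_add (IM_sum (fun j => IM_scale (P i j) (IH j)))
   (IM_scale al (IM_B (HY i t) (IH i)))).
apply: (IM_ext _ _ H) => //.
have Pji : forall i j, P j i = P i j by move=> i' j; rewrite -{1}Psym mxE.
rewrite [(_ *: _) ^+ t.+1]exprSr -mulmxE mulmxA.
set u := (\row_j (xh0 j - m0)) *m (a *: (P - al%:M)) ^+ t. clearbody u.
rewrite -scalemxAr mulmxBr mul_mx_scalar !mxE.
under eq_bigr => j _ do rewrite mulrDr.
rewrite big_split /= -mulr_suml Prow mul1r.
rewrite [X in _ = _ + _ * (X - _)](eq_bigr (fun j => P i j * u 0 j)); last by move=> j _; rewrite Pji mulrC.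
set S := \sum_j P i j * u 0 j.
rewrite exprS; ring.
Qed.

Lemma mean_xtil (R : realType) (d : measure_display) (T : measurableType d)
  (Pr : probability T R) n (P : 'M[R]_n.+1) (a al m0 : R) (y : 'I_n.+1 -> nat -> T -> R)
  (xh0 : 'I_n.+1 -> R) :
  P^T = P -> (forall i, \sum_j P i j = 1) ->
  (forall i t, IM Pr (y i t) (a ^+ t * m0)) ->
  forall t i, IM Pr (xtil P a al y xh0 t i)
    (a ^+ t * m0 + ((\row_j (xh0 j - m0)) *m (a *: (P - al%:M)) ^+ t) 0 i).
Proof.
move=> Psym Prow HY t; elim: t => [|t IH] i.
  apply: (IM_ext _ _ (IM_cst (xh0 i))) => //.
  by rewrite expr0 mulmx1 mxE mul1r addrC subrK.
have H := IM_scale a (IM_add (IM_sum (fun j => IM_scale (P i j) (IH j)))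
   (IM_scale al (IM_B (IM_sum (fun j => IM_scale (P i j) (HY j t))) (IH i)))).
apply: (IM_ext _ _ H) => //.
have Pji : forall i j, P j i = P i j by move=> i' j; rewrite -{1}Psym mxE.
rewrite [(_ *: _) ^+ t.+1]exprSr -mulmxE mulmxA.
set u := (\row_j (xh0 j - m0)) *m (a *: (P - al%:M)) ^+ t. clearbody u.
rewrite -scalemxAr mulmxBr mul_mx_scalar !mxE.
under eq_bigr => j _ do rewrite mulrDr.
rewrite big_split /= -mulr_suml Prow mul1r.
rewrite [X in _ = _ + _ * (X - _)](eq_bigr (fun j => P i j * u 0 j)); last by move=> j _; rewrite Pji mulrC.
set S := \sum_j P i j * u 0 j.
rewrite exprS; ring.
Qed.

Lemma mean_x (R : realType) (d : measure_display) (T : measurableType d)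
  (Pr : probability T R) (a : R) (x r : nat -> T -> R) :
  Pr.-integrable setT (EFin \o x 0%N) ->
  (forall t, Pr.-integrable setT (EFin \o r t) /\ ('E_Pr[r t] = 0)%E) ->
  (forall t om, x t.+1 om = a * x t om + r t om) ->
  forall t, IM Pr (x t) (a ^+ t * fine ('E_Pr[x 0%N])).
Proof.
move=> Hx0 Hr Hx; elim=> [|t IH].
  have L : x 0%N \in Lfun Pr 1 by apply/Lfun1_integrable.
  by split => //; rewrite expr0 mul1r fineK // expectation_fin_num.
have [r1 r2] := Hr t.
have Hrt : IM Pr (r t) 0 by split => //; apply/Lfun1_integrable.
apply: (IM_ext _ _ (IM_add (IM_scale a IH) Hrt)).
  by move=> om; rewrite Hx.
by rewrite addr0 exprS mulrA.
Qed.

Arguments mean_x {R d T Pr a x r}.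
Arguments mean_xhat {R d T Pr n P a} al {m0 y} xh0.
Arguments mean_xtil {R d T Pr n P a} al {m0 y} xh0.

Theorem proposition1 (R : realType) (d : measure_display) (T : measurableType d)
  (Pr : probability T R) (N : nat) (P : 'M[R]_N) (lam : nat -> R) (a : R)
  (x r : nat -> T -> R) (w y : 'I_N -> nat -> T -> R) :
  (2 <= N)%N ->
  sym_doubly_stochastic P ->
  char_poly P = \prod_(k < N) ('X - (lam k.+1)%:P) ->
  (forall k : nat, (1 <= k < N)%N -> lam k.+1 <= lam k) ->
  lam 1%N = 1 -> lam 2%N < 1 -> -1 < lam N ->
  Pr.-integrable setT (EFin \o x 0%N) ->
  (forall t, Pr.-integrable setT (EFin \o r t) /\ ('E_Pr[r t] = 0)%E) ->
  (forall i t, Pr.-integrable setT (EFin \o w i t) /\ ('E_Pr[w i t] = 0)%E) ->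
  (forall t om, x t.+1 om = a * x t om + r t om) ->
  (forall i t om, y i t om = x t om + w i t om) ->
  (exists alpha : R, 0 < alpha <= 1 /\ asympt_unbiased Pr P a alpha x y)
  <-> `|a| < 2 / (1 - lam N).
Proof.
case: N P w y => [//|n] P w y N2 [Psym Pnn Prow Pcol] Hchar Hmono H1 H2 HN Hx0 Hr Hw Hx Hy.
set m0 := fine ('E_Pr[x 0%N]).
have HX := mean_x Hx0 Hr Hx.
have HY : forall i t, IM Pr (y i t) (a ^+ t * m0).
  move=> i t; have [w1 w2] := Hw i t.
  have Hwt : IM Pr (w i t) 0 by split => //; apply/Lfun1_integrable.
  apply: (IM_ext _ _ (IM_add (HX t) Hwt)); first by move=> om; rewrite Hy.
  by rewrite addr0.
set M := fun al : R => a *: (P - al%:M).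
set e0 := fun xh0 : 'I_n.+1 -> R => \row_j (xh0 j - m0).
have keyh : forall al xh0 t i, ('E_Pr[(fun om => xhat P a al y xh0 t i om - x t om)%R])%E
    = ((e0 xh0 *m M al ^+ t) 0 i)%:E.
  move=> al xh0 t i; have [_ ->] := IM_B (mean_xhat al xh0 Psym Prow HY t i) (HX t).
  by rewrite addrAC subrr add0r.
have keyt : forall al xh0 t i, ('E_Pr[(fun om => xtil P a al y xh0 t i om - x t om)%R])%E
    = ((e0 xh0 *m M al ^+ t) 0 i)%:E.
  move=> al xh0 t i; have [_ ->] := IM_B (mean_xtil al xh0 Psym Prow HY t i) (HX t).
  by rewrite addrAC subrr add0r.
have lam_le1 : forall k, (1 <= k)%N -> (k <= n.+1)%N -> lam k <= 1.
  elim=> [//|[|k] IH] _ hk; first by rewrite H1.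
  apply: (le_trans (Hmono k.+1 _)); last by apply: IH; lia.
  apply/andP; split; lia.
have lam_geN : forall j, (j <= n)%N -> lam n.+1 <= lam (n.+1 - j)%N.
  elim=> [|j IH] hj; first by rewrite subn0.
  apply: le_trans (IH (ltnW hj)) _.
  have -> : (n.+1 - j = (n - j).+1)%N by lia.
  have -> : (n.+1 - j.+1 = (n - j))%N by lia.
  apply: Hmono; apply/andP; split; lia.
have lamk : forall k, (1 <= k)%N -> (k <= n.+1)%N -> lam n.+1 <= lam k <= 1.
  move=> k h1 h2; rewrite lam_le1 // andbT.
  have := lam_geN (n.+1 - k)%N; rewrite subKn //; apply; lia.
have lamN1 : lam n.+1 < 1.
  have /andP[h _] := lamk 2%N isT N2; exact: le_lt_trans h H2.
have D0 : 0 < 1 - lam n.+1 by rewrite subr_gt0.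
split.
- move=> [al [/andP[al0 al1] Hub]].
  rewrite ltNge; apply/negP => Hge.
  have Hge' : 2 <= `|a| * (1 - lam n.+1) by rewrite -ler_pdivrMr.
  have [lmb [v [vP [v0 big]]]] : exists lmb (v : 'rV_n.+1),
      v *m P = lmb *: v /\ v != 0 /\ 1 <= `|a * (lmb - al)|.
    have [h|h] := lerP 1 (`|a| * (1 - al)).
    + exists 1, (const_mx 1); split; [|split].
      * apply/rowP => j; rewrite !mxE mul1r.
        under eq_bigr do rewrite mxE mul1r.
        exact: Pcol.
      * apply/eqP => /rowP /(_ ord0); rewrite !mxE => /eqP; by rewrite oner_eq0.
      * by rewrite normrM (ger0_norm (x:=1-al)) ?subr_ge0.
    + have hroot : root (char_poly P) (lam n.+1).
        rewrite Hchar /root horner_prod; apply/prodf_eq0; exists ord_max => //.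
        by rewrite hornerXsubC subrr.
      rewrite -eigenvalue_root_char in hroot.
      have [v vP v0] := eigenvalueP hroot.
      exists (lam n.+1), v; split => //; split => //.
      rewrite normrM.
      have : `|a| * (al - lam n.+1) <= `|a| * `|lam n.+1 - al|.
        by apply: ler_wpM2l => //; rewrite distrC; exact: ler_norm.
      nra.
  set mu := a * (lmb - al).
  have vM : forall t, v *m M al ^+ t = mu ^+ t *: v.
    elim=> [|t IH]; first by rewrite !expr0 mulmx1 scale1r.
    rewrite exprSr -mulmxE mulmxA IH -scalemxAl /M -scalemxAr mulmxBr mul_mx_scalar vP.
    rewrite -scalerBl !scalerA exprSr /mu.
    congr (_ *: _); ring.
  have [i vi] : exists i, v 0 i != 0.
    case: (pickP (fun i => v 0 i != 0)) => [i vi|h]; first by exists i.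
    case/negP: v0; apply/eqP/rowP => j; rewrite mxE.
    have := h j; rewrite /= => /negbFE/eqP.
    by move=> <-; congr (v _ j); apply/val_inj; rewrite /= (ord1 i0).
  have [Hc _] := Hub (fun j => v 0 j + m0) (fun j => 0) i.
  have e0v : e0 (fun j => v 0 j + m0) = v by apply/rowP => j; rewrite !mxE addrK.
  move: Hc; rewrite (_ : (fun t => _) = (fun t => (mu ^+ t * v 0 i)%:E)); last first.
    by apply/funext => t; rewrite keyh e0v vM mxE.
  move/Aux.cvgE0; apply: Aux.not_cvg vi _.
  exact: big.
- move=> Ha; set al := (1 + lam n.+1) / 2.
  exists al; split; first by apply/andP; split; rewrite /al; lra.
  have Ha' : `|a| * (1 - lam n.+1) < 2 by rewrite -ltr_pdivlMr.
  have hs : forall l, l \in [seq lam (nat_of_ord k).+1 | k : 'I_n.+1 <- index_enum 'I_n.+1] -> `|a * (l - al)| < 1.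
    move=> l /mapP [k _ ->]. have /andP[h1 h2] := lamk k.+1 isT (ltn_ord k).
    have hb : `|lam k.+1 - al| <= (1 - lam n.+1) / 2.
      by rewrite ler_norml; apply/andP; split; rewrite /al; lra.
    rewrite normrM; have := ler_wpM2l (normr_ge0 a) hb.
    nra.
  have hv : forall xh0, e0 xh0 *m horner_mx P
      (\prod_(l <- [seq lam (nat_of_ord k).+1 | k : 'I_n.+1 <- index_enum 'I_n.+1]) ('X - l%:P)) = 0.
    by move=> xh0; rewrite big_map -Hchar Cayley_Hamilton mulmx0.
  rewrite /asympt_unbiased => xh0 xt0 i; split.
  + rewrite (_ : (fun t => _) = fun t => ((e0 xh0 *m M al ^+ t) 0 i)%:E); last first.
      by apply/funext => t; rewrite keyh.
    apply/Aux.cvgE0; exact: (@Aux.pow_cvg0 _ _ _ _ _ _ hs _ (hv xh0) i).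
  + rewrite (_ : (fun t => _) = fun t => ((e0 xt0 *m M al ^+ t) 0 i)%:E); last first.
      by apply/funext => t; rewrite keyt.
    apply/Aux.cvgE0; exact: (@Aux.pow_cvg0 _ _ _ _ _ _ hs _ (hv xt0) i).
Qed.
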